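(* For every $d\ge1$ there is a constant $c=c(d)>0$ such that for every valued field $K$ and every finite $X\subseteq K^d$ with $|X|=n$, there is a point $a\in X$ which lies in $\operatorname{conv}(Y)$ for at least $c\binom{n}{d+1}$ of the $\binom{n}{d+1}$ subsets $Y\subseteq X$ with $|Y|=d+1$.
   Context: $K$ is a field with valuation $\nu$ and valuation ring $\mathcal{O}=\{x:\nu(x)\ge0\}$. For $Y\subseteq K^d$, $\operatorname{conv}(Y)=\{\sum_{i=1}^n\alpha_iy_i: n\ge1,y_i\in Y,\alpha_i\in\mathcal{O},\sum_i\alpha_i=1\}$. *)

(* Defs.v *)
From HB Require Import structures.
From mathcomp Require Import all_boot all_order all_algebra.
From mathcomp Require Import finmap.
Set Implicit Arguments. Unset Strict Implicit. Unset Printing Implicit Defensive.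
Import Order.TTheory GRing.Theory Num.Theory.
Local Open Scope fset_scope.
Local Open Scope ring_scope.

Definition ordered_abelian_group (G : zmodType) (le : rel G) : Prop :=
  [/\ reflexive le, antisymmetric le, transitive le, total le
    & forall x y z : G, le x y -> le (x + z) (y + z)].

(* G extended by +oo, represented as option G (None = +oo). *)
Definition oleq (G : zmodType) (le : rel G) (a b : option G) : bool :=
  match a, b with
  | _, None => true
  | None, Some _ => false
  | Some a', Some b' => le a' b'
  end.

Definition oadd (G : zmodType) (a b : option G) : option G :=
  match a, b with
  | Some a', Some b' => Some (a' + b')
  | _, _ => None
  end.

Definition is_valuation (K : fieldType) (G : zmodType) (le : rel G)
  (nu : K -> option G) : Prop :=
  [/\ forall x : K, nu x = None <-> x = 0,
      forall x y : K, nu (x * y) = oadd (nu x) (nu y)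
    & forall x y : K, oleq le (nu x) (nu (x + y)) \/ oleq le (nu y) (nu (x + y))].

Definition in_valring (K : fieldType) (G : zmodType) (le : rel G)
  (nu : K -> option G) (x : K) : Prop := oleq le (Some 0) (nu x).

(* x \in conv(Y): x = sum_i alpha_i y_i, n >= 1, y_i in Y, alpha_i in O,
   sum_i alpha_i = 1.  The list s encodes the pairs (y_i, alpha_i). *)
Definition in_conv (K : fieldType) (G : zmodType) (le : rel G)
  (nu : K -> option G) (d : nat) (Y : {fset 'rV[K]_d}) (x : 'rV[K]_d) : Prop :=
  exists s : seq ('rV[K]_d * K),
    [/\ s != [::],
        forall p, p \in s -> p.1 \in Y,
        forall p, p \in s -> in_valring le nu p.2,
        \sum_(p <- s) p.2 = 1
      & x = \sum_(p <- s) p.2 *: p.1].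

(* Main.v *)
Require Import Defs.
From HB Require Import structures.
From mathcomp Require Import all_boot all_order all_algebra.
From mathcomp Require Import finmap.
From Stdlib Require Import ClassicalEpsilon.
Import Order.TTheory GRing.Theory Num.Theory.
Local Open Scope fset_scope.
Local Open Scope ring_scope.

Section Counting.
Local Open Scope nat_scope.
Lemma counting (T : finType) (k : nat) (R : T -> {set T} -> bool) :
  (forall a (Y : {set T}), a \in Y -> R a Y) ->
  (forall Z : {set T}, #|Z| = k.+1 -> exists2 a, a \in Z & R a (Z :\ a)) ->
  forall b : T,
  exists a : T, ('C(#|T|, k) <= k.+2 * #|[set Y : {set T} | (#|Y| == k) && R a Y]|)%N.
Proof.
move=> H1 H2 b.
set D := [set Y : {set T} | #|Y| == k].
set P := [set q : T * {set T} | (#|q.2| == k) && R q.1 q.2].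
set s := fun a => #|[set Y : {set T} | (#|Y| == k) && R a Y]|.
pose g (Z : {set T}) := if [pick a in Z | R a (Z :\ a)] is Some a then a else b.
have gP (Z : {set T}) : #|Z| = k.+1 -> g Z \in Z /\ R (g Z) (Z :\ g Z).
  move=> cZ; rewrite /g; case: pickP => [a /andP[]//|H].
  have [a aZ Ra] := H2 Z cZ; by move: (H a); rewrite aZ Ra.
pose phi (p : T * {set T}) := if p.1 \in p.2 then p
   else (g (p.1 |: p.2), (p.1 |: p.2) :\ g (p.1 |: p.2)).
set A := setX [set: T] D.
have phiP p : p \in A -> phi p \in P.
  case: p => a Y; rewrite !inE /= /phi /= => cY.
  case: ifP => aY; first by rewrite /= cY H1.
  have cZ : #|a |: Y| = k.+1 by rewrite cardsU1 aY (eqP cY).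
  have [gZ Rg] := gP _ cZ.
  rewrite /= Rg andbT.
  by move: cZ; rewrite (cardsD1 (g (a |: Y))) gZ add1n => -[->].
have cardA : #|A| <= k.+2 * #|P|.
  rewrite -sum1_card (partition_big phi (mem P)) //=.
  rewrite -sum1_card mulnC big_distrl /= leq_sum // => q qP; rewrite mul1n.
  rewrite sum1dep_card.
  apply: (leq_trans (subset_leq_card (_ : _ \subset q |: [set (c, (q.1 |: q.2) :\ c) | c in q.1 |: q.2]))).
    apply/subsetP => -[c Y]; rewrite !inE => /andP[/andP[_ cY] /eqP].
    rewrite /phi /=; case: ifP => cYm; first by move=> ->; rewrite eqxx.
    move=> <- /=; apply/orP; right.
    have cZ : #|c |: Y| = k.+1 by rewrite cardsU1 cYm (eqP cY).
    have [gZ _] := gP _ cZ.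
    rewrite setD1K //.
    apply/imsetP; exists c; first by rewrite !inE eqxx.
    by rewrite setU1K ?cYm.
  rewrite cardsU1 -add1n; apply: leq_add; first by case: (_ \notin _).
  apply: (leq_trans (leq_imset_card _ _)).
  by move: qP; rewrite inE => /andP[/eqP <- _]; rewrite cardsU1; case: (_ \notin _).
have cardP : #|P| = \sum_a s a.
  rewrite -sum1_card (partition_big (fun q : T * {set T} => q.1) xpredT) //=.
  apply: eq_bigr => a _; rewrite sum1dep_card /s.
  rewrite -[in RHS](card_imset _ (fun x y (e : (a,x) = (a,y)) => congr1 snd e)).
    apply: eq_card => -[c Y]; rewrite !inE /=.
    apply/idP/imsetP => [/andP[/andP[cY R'] /eqP E]|[Y' ]]; first by subst c; exists Y => //; rewrite inE cY.
    by rewrite inE => /andP[cY' RY'] [-> ->]; rewrite cY' RY' eqxx.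
pose m := [arg max_(a > b) s a].
exists m.
have sm : \sum_a s a <= #|T| * s m.
  rewrite -sum_nat_const leq_sum // => a _.
  rewrite /m; case: arg_maxnP => // i _; exact.
have cA : #|A| = #|T| * 'C(#|T|, k) by rewrite cardsX cardsT card_draws.
have pos : 0 < #|T| by apply/card_gt0P; exists b.
move: cardA; rewrite cA cardP => H.
have := leq_trans H (leq_mul (leqnn k.+2) sm).
by rewrite mulnCA leq_pmul2l.
Qed.

End Counting.

Lemma ex_min (T : eqType) (r : rel T) : transitive r -> total r ->
  forall s (x : T), exists2 m, m \in x :: s & all (r m) (x :: s).
Proof.
move=> tr tot; elim=> [|y s IH] x.
  by exists x; rewrite ?mem_head //= andbT; case/orP: (tot x x).
have [m ms /allP am] := IH y.
case rxm: (r x m).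
  exists x; first exact: mem_head.
  apply/allP => z; rewrite in_cons => /orP[/eqP ->|zs]; first by case/orP: (tot x x).
  exact: tr (am z zs).
have rmx : r m x by case/orP: (tot x m); rewrite ?rxm.
exists m; first by rewrite in_cons ms orbT.
by apply/allP => z; rewrite in_cons => /orP[/eqP ->//|]; apply: am.
Qed.

Section Val.
Variables (K : fieldType) (G : zmodType) (le : rel G) (nu : K -> option G).
Hypothesis oag : ordered_abelian_group le.
Hypothesis val : is_valuation le nu.

Lemma oleq_trans : transitive (oleq le).
Proof.
case: oag => _ _ tr _ _.
by move=> [b|] [a|] [c|] //=; apply: tr.
Qed.

Lemma oleq_total : total (oleq le).
Proof. case: oag => _ _ _ tot _. by move=> [a|] [b|] //=. Qed.

Lemma nu_some {x} : x != 0 -> exists g, nu x = Some g.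
Proof.
case: val => H _ _ xn0; case E: (nu x) => [g|]; first by exists g.
by move/H: E => x0; rewrite x0 eqxx in xn0.
Qed.

Lemma nu1 : nu 1 = Some 0.
Proof.
case: val => _ Hm _; have [g E] := nu_some (oner_neq0 K).
have := Hm 1 1; rewrite mulr1 E /= => -[] /esym /eqP.
by rewrite -subr_eq0 addrK => /eqP ->.
Qed.

Lemma two0 (h : G) : h + h = 0 -> h = 0.
Proof.
case: oag => _ anti _ tot comp hh.
case/orP: (tot 0 h) => H.
  have := comp _ _ h H; rewrite add0r hh => H'.
  by apply: anti; rewrite H H'.
have := comp _ _ h H; rewrite add0r hh => H'.
by apply: anti; rewrite H H'.
Qed.

Lemma nuN1 : nu (-1) = Some 0.
Proof.
case: val => _ Hm _.
have [g E] : exists g, nu (-1) = Some g by apply: nu_some; rewrite oppr_eq0 oner_neq0.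
have := Hm (-1) (-1); rewrite mulrNN mulr1 nu1 E /= => -[] /esym /two0 ->.
by [].
Qed.

Lemma nuN x : nu (- x) = nu x.
Proof.
case: val => _ Hm _.
by rewrite -mulN1r Hm nuN1; case: (nu x) => //= a; rewrite add0r.
Qed.

Lemma valring_crit z y : y != 0 -> oleq le (nu y) (nu (z * y)) -> in_valring le nu z.
Proof.
case: val => _ Hm _ yn0; have [g E] := nu_some yn0.
rewrite /in_valring Hm E; case: (nu z) => //= h.
case: oag => _ _ _ _ comp H.
by have := comp _ _ (- g) H; rewrite subrr addrK.
Qed.

Lemma radon d (Z : {fset 'rV[K]_d}) : #|` Z| = d.+2 ->
  exists2 z, z \in Z & in_conv le nu (Z `\ z) z.
Proof.
move=> cZ.
pose x (i : 'I_d.+2) : 'rV[K]_d := nth 0 (enum_fset Z) i.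
have xZ i : x i \in Z by apply: mem_nth; rewrite cZ.
have xinj : injective x.
  move=> i i' /eqP; rewrite /x nth_uniq ?cZ ?fset_uniq // => /eqP; apply: val_inj.
pose M := \matrix_(i < d.+2, j < d + 1) (row_mx (x i) (1 : 'rV[K]_1)) 0 j.
have : kermx M != 0.
  rewrite kermx_eq0 /row_free; apply/negP => /eqP E.
  by have := rank_leq_col M; rewrite E addn1 ltnn.
move=> kn0.
have [i0 Hi0] : exists i, row i (kermx M) != 0.
  case: (pickP (fun i => row i (kermx M) != 0)) => [i Hi|H]; first by exists i.
  by move: kn0; rewrite (_ : kermx M = 0) ?eqxx //; apply/row_matrixP => i; rewrite row0; move: (H i) => /negbFE/eqP.
pose lam := row i0 (kermx M).
have lamM : lam *m M = 0 by rewrite /lam -row_mul mulmx_ker row0.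
pose l i := lam 0 i.
have Sum0 : \sum_i l i = 0.
  have := congr1 (fun A : 'M[K]_(1, d + 1) => A 0 (rshift d (0 : 'I_1))) lamM.
  rewrite !mxE => E; rewrite -[X in _ = X]E; apply: eq_bigr => i _; by rewrite /l /lam [M _ _]mxE row_mxEr !mxE eqxx mulr1.
have SumV : \sum_i l i *: x i = 0.
  apply/rowP => k; rewrite summxE mxE.
  have := congr1 (fun A : 'M[K]_(1, d + 1) => A 0 (lshift 1 k)) lamM.
  rewrite !mxE => E0; rewrite -[X in _ = X]E0; apply: eq_bigr => i _; by rewrite /l /lam [M _ _]mxE row_mxEl !mxE.
have [i1 li1] : exists i, l i != 0.
  case: (pickP (fun i => l i != 0)) => [i Hi|H]; first by exists i.
  by move: Hi0; rewrite -/lam (_ : lam = 0) ?eqxx //; apply/rowP => k; rewrite [RHS]mxE; move: (H k) => /negbFE/eqP.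
have [m mIn allm] := @ex_min _ (oleq le) oleq_trans oleq_total [seq nu (l i) | i <- index_enum 'I_d.+2] (nu (l i1)).
have [j mj] : exists j, m = nu (l j).
  move: mIn; rewrite in_cons => /orP[/eqP ->|/mapP[j _ ->]]; by eexists.
have hj i : oleq le (nu (l j)) (nu (l i)).
  rewrite -mj; apply: (allP allm); rewrite in_cons; apply/orP; right.
  by apply: map_f; rewrite mem_index_enum.
have lj0 : l j != 0.
  apply/negP => /eqP lj; move: (hj i1); rewrite lj.
  case: val => Hz _ _; rewrite (proj2 (Hz 0) erefl).
  case E: (nu (l i1)) => //; by move/Hz: E => /eqP; rewrite (negbTE li1).
pose be i := - l i / l j.
pose sq := [seq (x i, be i) | i <- index_enum 'I_d.+2 & i != j].
have sumrest : \sum_(i | i != j) l i = - l j.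
  by apply/eqP; rewrite -subr_eq0 opprK addrC; move: Sum0; rewrite (bigD1 j) //= => ->.
have sumrestV : \sum_(i | i != j) l i *: x i = - (l j *: x j).
  by apply/eqP; rewrite -subr_eq0 opprK addrC; move: SumV; rewrite (bigD1 j) //= => ->.
exists (x j); first exact: xZ.
exists sq; split.
- have : (x (lift j ord0), be (lift j ord0)) \in sq.
    by apply: map_f; rewrite mem_filter eq_sym neq_lift mem_index_enum.
  by case: (sq).
- move=> p /mapP[i]; rewrite mem_filter => /andP[ij _] ->.
  rewrite in_fsetD1 xZ andbT; apply: contra ij => /eqP /xinj ->; exact: eqxx.
- move=> p /mapP[i]; rewrite mem_filter => /andP[ij _] -> /=.
  apply: (@valring_crit _ (l j) lj0); rewrite /be divfK // nuN; exact: hj.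
- rewrite big_map big_filter /=.
  rewrite /be -mulr_suml sumrN sumrest opprK divff //.
- rewrite big_map big_filter /=.
  rewrite (eq_bigr (fun i => (- (l j)^-1) *: (l i *: x i))); last first.
    by move=> i _; rewrite /be scalerA mulNr mulrC mulNr.
  by rewrite -scaler_sumr sumrestV scalerN scaleNr opprK scalerA mulVf // scale1r.
Qed.
End Val.

Definition asb (P : Prop) : bool := if excluded_middle_informative P then true else false.
Lemma asbP (P : Prop) : asb P = true <-> P.
Proof. by rewrite /asb; case: excluded_middle_informative. Qed.

Theorem theorem4p16 :
  forall d : nat, (1 <= d)%N ->
  exists c : rat, 0 < c /\
    forall (K : fieldType) (G : zmodType) (le : rel G) (nu : K -> option G),
      ordered_abelian_group le -> is_valuation le nu ->
      forall X : {fset 'rV[K]_d}, (0 < #|` X|)%N ->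
      exists2 a : 'rV[K]_d, a \in X &
        exists S : {fset {fset 'rV[K]_d}},
          [/\ forall Y, Y \in S -> Y `<=` X,
              forall Y, Y \in S -> #|` Y| = d.+1,
              forall Y, Y \in S -> in_conv le nu Y a
            & c * ('C(#|` X|, d.+1))%:R <= (#|` S|)%:R].
Proof.
move=> d _; exists (1 / (d.+3)%:R); split.
  by rewrite mul1r invr_gt0 ltr0n.
move=> K G le nu oag hv X Xn0.
have [x0 x0X] : exists x, x \in X by apply/fset0Pn; rewrite -cardfs_gt0.
pose F (Y : {set X}) : {fset 'rV[K]_d} := [fsetval y in Y].
have inF (Y : {set X}) (u : X) : (val u \in F Y) = (u \in Y) by rewrite val_in_fset.
have FX Y : F Y `<=` X by apply/fsubsetP => v /in_fset_valP[].
have cardF Y : #|` F Y| = #|Y| by rewrite card_imfset /= -?cardE //; exact: val_inj.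
have Finj : injective F.
  move=> Y Y' /fsetP E; apply/setP => u; by rewrite -!inF E.
have FD (Z : {set X}) (a : X) : F (Z :\ a) = F Z `\ val a.
  apply/fsetP => v; rewrite in_fsetD1.
  case: (boolP (v \in X)) => [vX|vX].
    rewrite (_ : v = val [` vX]) // !inF !inE (inj_eq val_inj) //.
  by rewrite !in_fset_valF // andbF.
pose R (a : X) (Y : {set X}) := asb (in_conv le nu (F Y) (val a)).
have H1 (a : X) (Y : {set X}) : a \in Y -> R a Y.
  move=> aY; apply/asbP; exists [:: (val a, 1)]; split => //.
  - by move=> p; rewrite inE => /eqP -> /=; rewrite inF.
  - move=> p; rewrite inE => /eqP -> /=; rewrite /in_valring (@nu1 K G le nu hv) /=.
    by case: oag.
  - by rewrite big_cons big_nil addr0.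
  - by rewrite big_cons big_nil addr0 scale1r.
have H2 (Z : {set X}) : #|Z| = d.+2 -> exists2 a, a \in Z & R a (Z :\ a).
  move=> cZ; have [z zF Hz] := @radon K G le nu oag hv _ _ (etrans (cardF Z) cZ).
  move/in_fset_valP: zF => [zX zZ].
  exists [` zX] => //; apply/asbP; rewrite FD //.
have [a Ha] := @counting _ d.+1 R H1 H2 [` x0X].
exists (val a); first exact: fsvalP.
set Sa := [set Y : {set X} | (#|Y| == d.+1) && R a Y] in Ha.
exists [fset F Y | Y in Sa]; split.
- by move=> Y /imfsetP[Y0 _ ->].
- by move=> Y /imfsetP[Y0]; rewrite inE => /andP[/eqP <- _] ->.
- by move=> Y /imfsetP[Y0]; rewrite inE => /andP[_ /asbP ?] ->.
  rewrite card_imfset //= -cardE; rewrite -cardfE in Ha.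
  rewrite mul1r mulrC ler_pdivrMr ?ltr0n // -natrM ler_nat mulnC //.
Qed.
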